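(* Let $(\mathbf C,I)$ be an orthogonally based finite-type chain complex of real inner product spaces and let $M$ be an $(n,n-1)$-free Morse matching on it, with Morse retraction $\Phi:\mathbf C^M\to\mathbf C$, $\Psi:\mathbf C\to\mathbf C^M$. Then (1) $\Phi_n:\mathbf C_n^M\to\mathbf C_n$ and (2) $\Psi_{n-1}^\dagger:\mathbf C^M_{n-1}\to\mathbf C_{n-1}$ are the subspace inclusions, and hence isometries.
   Context: Based chain complex: chain complex $(\mathbf C,\partial)$ of finite-dimensional real inner product spaces $\mathbf C_n$, $n\ge0$, with disjoint finite index sets $I_n$ and $\mathbf C_n=\bigoplus_{\alpha\in I_n}C_\alpha$; orthogonally based means $C_\alpha\perp C_{\alpha'}$ for $\alpha\ne\alpha'$. $\partial_{\beta,\alpha}=\pi_\beta\partial_n i_\alpha$. Graph: edges $\alpha\to\beta$ when $\partial_{\beta,\alpha}\ne0$. Morse matching: edge set $M$ with each cell on at most one edge, $\partial_{\beta,\alpha}$ an isomorphism for $\alpha\to\beta\in M$, and ''directed path from $\alpha$ to $\beta$ in the graph with $M$ reversed'' a partial order on each $I_n$; $M^0$ = unmatched cells. $M$ is $(n,n-1)$-free if no edge of $M$ joins an $n$-cell to an $(n-1)$-cell. With $\Gamma_{\beta,\alpha}$ the sum over directed paths from $\alpha$ to $\beta$ in the reversed graph of composites of $\partial_{\sigma_{i+1},\sigma_i}$ (ordinary steps) and $-\partial_{\sigma_i,\sigma_{i+1}}^{-1}$ (reversed matched edges), trivial path giving the identity: $\mathbf C^M_n=\bigoplus_{\alpha\in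 I_n\cap M^0}C_\alpha$ (restricted inner product), $\Phi(x)=\sum_{\beta\in I_n}\Gamma_{\beta,\alpha}(x)$ for $x\in C_\alpha$, $\alpha\in M^0\cap I_n$, and $\Psi(x)=\sum_{\beta\in M^0\cap I_n}\Gamma_{\beta,\alpha}(x)$ for $x\in C_\alpha$, $\alpha\in I_n$. $\dagger$ denotes adjoint. *)

(* Defs.v *)
From HB Require Import structures.
From mathcomp Require Import all_boot all_order all_algebra.
From mathcomp Require Import boolp reals.
Import Order.TTheory GRing.Theory Num.Theory.
Local Open Scope ring_scope.

(* Data of a based chain complex of finite type of real inner product spaces *)
(*  - cells : the (disjoint) union of the index sets I_k                     *)
(*  - deg c = k  iff  c \in I_k ;  idx k = I_k (a finite duplicate-free list) *)
(*  - dim c = dim C_c ; an element of C_c is a column vector 'cV_(dim c),     *)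
(*  - bd b a = \partial_{b,a} = pi_b \partial i_a : C_a -> C_b               *)
(* C_k = (+)_{a in I_k} C_a, elements of C_k are families of blocks, and the *)
(* inner product on C_k is the ORTHOGONAL sum of the block inner products   *)
(* (this is what "orthogonally based" means).                                *)
Record based_data (R : realType) := BasedData {
  cell : eqType;
  deg : cell -> nat;
  idx : nat -> seq cell;
  dim : cell -> nat;
  gram : forall a : cell, 'M[R]_(dim a);
  bd : forall b a : cell, 'M[R]_(dim b, dim a)
}.
Arguments cell {R}. Arguments deg {R}. Arguments idx {R}. Arguments dim {R}.
Arguments gram {R}. Arguments bd {R}.

Section BasedComplex.
Variables (R : realType) (C : based_data R).
Local Notation cell := (cell C).
Local Notation deg := (deg C).
Local Notation I := (idx C).
Local Notation dim := (dim C).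
Local Notation bd := (bd C).

(* a chain: one block per cell (only the blocks of cells of the relevant    *)
(* degree matter)                                                           *)
Definition chain := forall a : cell, 'cV[R]_(dim a).

Definition ip {a : cell} (u v : 'cV[R]_(dim a)) : R := (u^T *m gram C a *m v) 0 0.

Definition index_sets : Prop :=
  (forall k, uniq (I k)) /\ (forall k c, (c \in I k) = (deg c == k)).

Definition inner_products : Prop :=
  forall a : cell, (gram C a)^T = gram C a /\
    (forall u : 'cV[R]_(dim a), u != 0 -> 0 < ip u u).

(* \partial maps C_k into C_{k-1} (and \partial_0 = 0) *)
Definition graded_boundary : Prop :=
  forall b a : cell, deg a != (deg b).+1 -> bd b a = 0.

Definition chain_complex : Prop :=
  forall c a : cell, \sum_(b <- I (deg a).-1) bd c b *m bd b a = 0.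

Definition based_complex : Prop :=
  [/\ index_sets, inner_products, graded_boundary & chain_complex].

Variable M : rel cell.  (* M a b : the edge a -> b of the graph is in M *)

Definition unmatched (a : cell) : bool := `[< forall c, ~ M a c /\ ~ M c a >].

Definition ipC (k : nat) (x y : chain) : R := \sum_(a <- I k) ip (x a) (y a).
Definition ipCM (k : nat) (x y : chain) : R :=
  \sum_(a <- I k | unmatched a) ip (x a) (y a).

Definition edge (a b : cell) : bool := bd b a != 0.

(* one step a -> c in the graph with the edges of M reversed *)
Definition rstep (a c : cell) : bool := (edge a c && ~~ M a c) || M c a.

Definition reach (a b : cell) : Prop :=
  exists p : seq cell, path rstep a p && (last a p == b).

Definition is_iso {m n : nat} (T : 'M[R]_(m, n)) : Prop :=
  exists T' : 'M[R]_(n, m), T' *m T = 1%:M /\ T *m T' = 1%:M.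

Definition partial_order_on (k : nat) : Prop :=
  [/\ forall a, a \in I k -> reach a a,
      forall a b c, a \in I k -> b \in I k -> c \in I k ->
                    reach a b -> reach b c -> reach a c &
      forall a b, a \in I k -> b \in I k -> reach a b -> reach b a -> a = b].

Definition morse_matching : Prop :=
  [/\ (forall a b, M a b -> edge a b),
      (* every cell lies on at most one edge of M *)
      (forall a b a' b', M a b -> M a' b' ->
           [|| a == a', a == b', b == a' | b == b'] -> a = a' /\ b = b'),
      (forall a b, M a b -> is_iso (bd b a)) &
      (forall k, partial_order_on k)].

Definition nn1_free (n : nat) : Prop :=
  forall a b, M a b -> ~ (deg a = n /\ deg b = n.-1).

(* sum over directed paths of length exactly m from a to b, in the graph     *)
(* with M reversed, of the composites of \partial_{s',s} (ordinary steps)   *)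
(* and -\partial_{s,s'}^{-1} (reversed matched edges).  For an invertible   *)
(* matrix, pinvmx is its inverse.                                           *)
Fixpoint pathsum (m : nat) (b a : cell) {struct m} : 'M[R]_(dim b, dim a) :=
  match m with
  | 0 => if a == b then conform_mx 0 (1%:M : 'M[R]_(dim a)) else 0
  | m'.+1 =>
      \sum_(c <- I (deg a).-1 | edge a c && ~~ M a c) pathsum m' b c *m bd c a
    + \sum_(c <- I (deg a).+1 | M c a) pathsum m' b c *m (- pinvmx (bd a c))
  end.

(* Every directed path (of the graph with M reversed, M Morse) between two   *)
(* cells of degree k is simple and stays in degrees k-1, k, k+1, hence has   *)
(* length < bound a; so Gamma is the sum over ALL directed paths.            *)
Definition bound (a : cell) : nat :=
  (size (I (deg a).-1) + size (I (deg a)) + size (I (deg a).+1)).+1.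

Definition Gamma (b a : cell) : 'M[R]_(dim b, dim a) :=
  \sum_(m < bound a) pathsum m b a.

Definition Phi (k : nat) (x : chain) : chain :=
  fun b => \sum_(a <- I k | unmatched a) Gamma b a *m x a.

Definition Psi (k : nat) (y : chain) : chain :=
  fun b => \sum_(a <- I k) Gamma b a *m y a.

Definition inclM (x : chain) : chain :=
  fun b => if unmatched b then x b else 0.

End BasedComplex.

Definition is_adjoint {X Y R : Type} (ipX : X -> X -> R) (ipY : Y -> Y -> R)
  (T : X -> Y) (S : Y -> X) : Prop :=
  forall x y, ipY (T x) y = ipX x (S y).

Arguments ip {R C a}.
Arguments unmatched {R C}.
Arguments ipC {R C}. Arguments ipCM {R C}.
Arguments based_complex {R}. Arguments morse_matching {R C}.
Arguments nn1_free {R C}. Arguments Phi {R C}. Arguments Psi {R C}.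
Arguments inclM {R C}. Arguments Gamma {R C}.
Arguments chain {R}.

(* Main.v *)
Require Import Defs.
From HB Require Import structures.
From mathcomp Require Import all_boot all_order all_algebra.
From mathcomp Require Import boolp reals zify.
Import GRing.Theory.
Local Open Scope ring_scope.

Lemma pathsum_zero (R : realType) (C : based_data R) (M : rel (cell C)) (b : cell C)
  (Q P : cell C -> Prop) :
  (forall c c', Q c -> edge R C c c' -> ~~ M c c' -> P c') ->
  (forall c c', Q c -> M c' c -> P c') ->
  (forall c, P c -> Q c) ->
  (forall c, P c -> c != b) ->
  forall m c, (P c -> pathsum R C M m b c = 0) /\ (Q c -> pathsum R C M m.+1 b c = 0).
Proof.
move=> Hd Hu PQ Pb.
have step : forall m c, Q c -> (forall c', P c' -> pathsum R C M m b c' = 0) ->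
   pathsum R C M m.+1 b c = 0.
  move=> m c Qc IH /=.
  rewrite [X in X + _]big1 ?[X in _ + X]big1 ?addr0 //.
  - by move=> c' Hc'; rewrite IH ?mul0mx //; apply: (Hu c c').
  - by move=> c' /andP[e nm]; rewrite IH ?mul0mx //; apply: (Hd c c').
elim=> [|m IH] c.
  split; last by move=> Qc; apply: step => // c' Pc' /=; rewrite (negbTE (Pb _ Pc')).
  by move=> Pc /=; rewrite (negbTE (Pb _ Pc)).
split; first by move=> Pc; apply: step (PQ _ Pc) _ => c' Pc'; apply: (proj1 (IH c')).
move=> Qc; apply: step Qc _ => c' Pc'; exact: (proj2 (IH c') (PQ _ Pc')).
Qed.

Lemma Gamma0 (R : realType) (C : based_data R) (M : rel (cell C)) (b a : cell C) :
  (forall m, pathsum R C M m.+1 b a = 0) -> Gamma M b a = pathsum R C M 0 b a.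
Proof.
move=> H; rewrite /Gamma /bound big_ord_recl big1 ?addr0 // => i _; exact: H.
Qed.

Lemma sum_delta (R : realType) (C : based_data R) (M : rel (cell C)) (k : nat)
  (Pr : pred (cell C)) (x : chain C) (b : cell C) :
  index_sets R C -> b \in idx C k ->
  (forall a, a \in idx C k -> Pr a -> Gamma M b a = pathsum R C M 0 b a) ->
  \sum_(a <- idx C k | Pr a) Gamma M b a *m x a = if Pr b then x b else 0.
Proof.
move=> [Hu _] bI HG.
rewrite big_mkcond (bigD1_seq b) //= big_seq_cond big1.
  rewrite addr0; case: ifP => Pb //.
  by rewrite HG //= eqxx conform_mx_id mul1mx.
move=> a /andP[aI nab]; case: ifP => Pa //.
by rewrite HG //= (negbTE nab) mul0mx.
Qed.

Lemma ip_incl (R : realType) (C : based_data R) (M : rel (cell C)) k (z : chain C) :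
  ipC k (inclM M z) (inclM M z) = ipCM M k z z.
Proof.
rewrite /ipC /ipCM [RHS]big_mkcond /=; apply: eq_bigr => a _; rewrite /inclM.
by case: ifP => //; rewrite /ip trmx0 !mul0mx mxE.
Qed.

Theorem mainTheorem11 (R : realType) (C : based_data R) (M : rel (cell C))
  (n : nat) :
  based_complex C -> morse_matching M -> (0 < n)%N -> nn1_free M n ->
  (* (1) Phi_n is the subspace inclusion C^M_n -> C_n, hence an isometry *)
  ((forall (x : chain C) (b : cell C), b \in idx C n ->
       Phi M n x b = inclM M x b) /\
   (forall x : chain C, ipC n (Phi M n x) (Phi M n x) = ipCM M n x x)) /\
  (* (2) Psi_{n-1}^dagger is the subspace inclusion C^M_{n-1} -> C_{n-1},  *)
  (*     hence an isometry                                                  *)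
  (is_adjoint (ipC n.-1) (ipCM M n.-1) (Psi M n.-1) (inclM M) /\
   (forall z : chain C, ipC n.-1 (inclM M z) (inclM M z) = ipCM M n.-1 z z)).
Proof.
move=> [HI Hip Hg Hcc] [HMe HMu HMi HMp] n0 Hfree.
have degI : forall k c, c \in idx C k -> deg C c = k.
  by move=> k c; rewrite (proj2 HI) => /eqP.
have edeg : forall c c', edge R C c c' -> deg C c = (deg C c').+1.
  move=> c c' e; case: (eqVneq (deg C c) (deg C c').+1) => // ne.
  by move: e; rewrite /edge Hg // eqxx.
have Mdeg : forall c c', M c c' -> deg C c = (deg C c').+1.
  by move=> c c' /HMe; apply: edeg.
have unm : forall b, unmatched M b -> forall c, ~ M b c /\ ~ M c b.
  by move=> b /asboolP.
have Hd : forall c c', (deg C c <= n.-1)%N -> edge R C c c' -> (deg C c' <= n.-1)%N.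
  by move=> c c' Qc /edeg; lia.
have Hu : forall c c', (deg C c <= n.-1)%N -> M c' c -> (deg C c' <= n.-1)%N.
  move=> c c' Qc Mc; have := Hfree _ _ Mc; have := Mdeg _ _ Mc.
  case: (deg C c =P n.-1) => [e|ne] e2.
    by move=> H; exfalso; apply: H; split => //; lia.
  move=> _; lia.
have part1 : forall (x : chain C) (b : cell C), b \in idx C n ->
       Phi M n x b = inclM M x b.
  move=> x b bI; rewrite /Phi /inclM (@sum_delta R C M n _ x b HI bI) //.
  move=> a aI ua; apply: Gamma0 => m /=.
  have Z := @pathsum_zero R C M b (fun c => (deg C c <= n.-1)%N)
     (fun c => (deg C c <= n.-1)%N)
     (fun c c' Qc e _ => Hd c c' Qc e) (fun c c' Qc Mc => Hu c c' Qc Mc)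
     (fun c Pc => Pc).
  rewrite [X in X + _]big1 ?[X in _ + X]big1 ?addr0 //.
  - by move=> c Mc; exfalso; apply: (proj2 (unm a ua c)).
  - move=> c /andP[e _]; rewrite (proj1 (Z _ m c)) ?mul0mx //.
      by move=> c' Pc'; apply/eqP => E; move: Pc'; rewrite E (degI _ _ bI); lia.
    by have := edeg _ _ e; rewrite (degI _ _ aI); lia.
split.
  split => // x; rewrite -ip_incl /ipC; apply: eq_big_seq => a aI.
  by rewrite part1.
split; last by move=> z; apply: ip_incl.
move=> x y; rewrite /ipCM /ipC.
transitivity (\sum_(a <- idx C n.-1 | unmatched M a) ip (x a) (y a)).
  rewrite big_seq_cond [RHS]big_seq_cond; apply: eq_bigr => b /andP[bI ub].
  rewrite /Psi (@sum_delta R C M n.-1 xpredT x b HI bI) //.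
  move=> a aI _; apply: Gamma0 => m.
  have Z := @pathsum_zero R C M b (fun c => (deg C c <= n.-1)%N)
     (fun c => (deg C c <= n.-1)%N /\ c != b).
  apply: (proj2 (Z _ _ _ _ m a)); last by rewrite (degI _ _ aI).
  - move=> c c' Qc e _; split; first exact: Hd e.
    by apply/eqP => E; move: (edeg _ _ e); rewrite E (degI _ _ bI); lia.
  - move=> c c' Qc Mc; split; first exact: Hu Mc.
    by apply/eqP => E; apply: (proj1 (unm b ub c)); rewrite -E.
  - by move=> c [].
  - by move=> c [].
rewrite [LHS]big_mkcond /=; apply: eq_bigr => a _; rewrite /inclM.
by case: ifP => //; rewrite /ip mulmx0 mxE.
Qed.
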